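(* Let $X$ be a nonempty set, $S$ a semigroup and $\phi':X\to E(S)$ a one-to-one mapping. If $\phi'$ induces a unique skeleton $A$ of $S$, then $\langle A\rangle$ is the smallest regular subsemigroup of $S$ containing $X\phi'$. In particular, if moreover $\langle A\rangle=S$, then $S$ is regular and has no proper regular subsemigroup containing $X\phi'$ (i.e. $(S,\phi')$ is weakly idempotent generated by $X$).
   Context: Let $1$ be a symbol not in $X$. Elements of height $\ge 2$ are triples $g=(g^l,g^c,g^r)$; $\Gamma_0(X)=\{1\}$, $\Gamma_1(X)=X$, each $x\in X$ identified with $(1,x,1)$; for $i\ge 2$, $\Gamma_i(X)$ is the set of triples $g\in\Gamma_{i-1}(X)\times\Gamma_{i-2}(X)\times\Gamma_{i-1}(X)$ with $g^l\neq g^r$ and $g^c\in\{(g^l)^l,(g^l)^r\}\cap\{(g^r)^l,(g^r)^r\}$; $\Gamma(X)=\bigcup_{i\ge0}\Gamma_i(X)$. $S^1$ is $S$ with an identity adjoined if necessary; $E(\cdot)$ is the set of idempotents. For idempotents $e,f$ of a semigroup $R$, $S(e,f)=\{h\in E(R): fh=h=he,\ ehf=ef\}$. A skeleton mapping is a mapping $\phi:\Gamma(X)\to E(S^1)$ such that (i) $\phi|_X$ is one-to-one with $X\phi\subseteq E(S)$; (ii) $(1\phi)(g\phi)=g\phi=(g\phi)(1\phi)$ for all $g\in X$; (iii) $g\phi\in S\big((g^r\phi)(g^c\phi),(g^c\phi)(g^l\phi)\big)$ (in $S^1$) for all $g\in\Gamma_i(X)$, $i\ge2$. A skeleton of $S$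 induced by $\phi'$ is a set $(\Gamma(X)\setminus\{1\})\phi$ where $\phi$ is a skeleton mapping with $\phi|_X=\phi'$; ''$\phi'$ induces a unique skeleton $A$'' means $A$ is the only such set. *)

(* Defs.v *)
Set Implicit Arguments.
Unset Strict Implicit.

Section Defs.
Variable X : Type.

(* Raw trees over X ∪ {1}: G1 is the symbol 1, GX x is x ∈ X (identified with
   the triple (1,x,1)), GT l c r is a triple (l,c,r). *)
Inductive gtree : Type :=
| G1 : gtree
| GX : X -> gtree
| GT : gtree -> gtree -> gtree -> gtree.

(* g^l and g^r; for x ∈ X, x = (1,x,1) so x^l = x^r = 1.
   The value on G1 is irrelevant (never used). *)
Definition glft (g : gtree) : gtree :=
  match g with G1 => G1 | GX _ => G1 | GT l _ _ => l end.
Definition grgt (g : gtree) : gtree :=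
  match g with G1 => G1 | GX _ => G1 | GT _ _ r => r end.

Fixpoint Gamma (i : nat) (g : gtree) : Prop :=
  match i with
  | 0 => g = G1
  | S 0 => exists x, g = GX x
  | S ((S j) as k) =>
      exists l c r, g = GT l c r /\ Gamma k l /\ Gamma j c /\ Gamma k r /\
        l <> r /\ (c = glft l \/ c = grgt l) /\ (c = glft r \/ c = grgt r)
  end.

Definition inGamma (g : gtree) : Prop := exists i, Gamma i g.
End Defs.

Arguments G1 {X}.

Section Semigroup.
Variable S : Type.
Variable mul : S -> S -> S.

(* S^1 : S with an identity (None) adjoined. *)
Definition mul1 (a b : option S) : option S :=
  match a, b with
  | None, _ => b
  | _, None => a
  | Some x, Some y => Some (mul x y)
  end.

Definition idem1 (e : option S) : Prop := mul1 e e = e.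

Definition sandwich (e f h : option S) : Prop :=
  idem1 h /\ mul1 f h = h /\ h = mul1 h e /\ mul1 (mul1 e h) f = mul1 e f.

Definition skeleton_mapping (X : Type) (phi : gtree X -> option S) : Prop :=
  (forall g, inGamma g -> idem1 (phi g)) /\
  (forall x, exists s, phi (GX x) = Some s /\ mul s s = s) /\
  (forall x y, phi (GX x) = phi (GX y) -> x = y) /\
  (forall x, mul1 (phi G1) (phi (GX x)) = phi (GX x) /\
             mul1 (phi (GX x)) (phi G1) = phi (GX x)) /\
  (forall i l c r, Gamma (Datatypes.S (Datatypes.S i)) (GT l c r) ->
     sandwich (mul1 (phi r) (phi c)) (mul1 (phi c) (phi l)) (phi (GT l c r))).

Definition extends (X : Type) (phi : gtree X -> option S) (phi' : X -> S) : Prop :=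
  forall x, phi (GX x) = Some (phi' x).

Definition skeleton_of (X : Type) (phi : gtree X -> option S) (a : option S) : Prop :=
  exists g, inGamma g /\ g <> G1 /\ phi g = a.

Definition unique_skeleton (X : Type) (phi' : X -> S) (A : option S -> Prop) : Prop :=
  (exists phi, skeleton_mapping phi /\ extends phi phi') /\
  (forall phi, skeleton_mapping phi -> extends phi phi' ->
     forall a, skeleton_of phi a <-> A a).

Definition generated (A : option S -> Prop) (a : option S) : Prop :=
  forall T : option S -> Prop, (forall b, A b -> T b) ->
    (forall b c, T b -> T c -> T (mul1 b c)) -> T a.

Definition regular_subsemigroup (T : S -> Prop) : Prop :=
  (forall a b, T a -> T b -> T (mul a b)) /\
  (forall a, T a -> exists b, T b /\ mul (mul a b) a = a).

Definition regular_semigroup : Prop :=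
  forall a, exists b, mul (mul a b) a = a.
End Semigroup.

(* Main.v *)
Require Import Defs.
From Stdlib Require Import List Classical ClassicalEpsilon.
From Stdlib Require Import Lia.
Import ListNotations.
Set Implicit Arguments.
Unset Strict Implicit.

Section Trees.
Variable X : Type.

Lemma Gamma_G1 i : Gamma i (@G1 X) -> i = 0.
Proof.
  destruct i as [|[|j]]; simpl; intros H; auto.
  - destruct H as [x H]; discriminate.
  - destruct H as (l & c & r & E & _); discriminate.
Qed.

Lemma Gamma_GX i (x : X) : Gamma i (GX x) -> i = 1.
Proof.
  destruct i as [|[|j]]; simpl; intros H; auto.
  - discriminate.
  - destruct H as (l & c & r & E & _); discriminate.
Qed.

Lemma Gamma_GT i (l c r : gtree X) : Gamma i (GT l c r) ->
  exists j, i = S (S j) /\ Gamma (S j) l /\ Gamma j c /\ Gamma (S j) r /\ l <> r /\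
    (c = glft l \/ c = grgt l) /\ (c = glft r \/ c = grgt r).
Proof.
  destruct i as [|[|j]]; simpl; intros H.
  - discriminate.
  - destruct H as [x H]; discriminate.
  - destruct H as (l' & c' & r' & E & H1 & H2 & H3 & H4 & H5 & H6).
    injection E; intros; subst. exists j; auto 10.
Qed.

Lemma Gamma_unique (g : gtree X) : forall i j, Gamma i g -> Gamma j g -> i = j.
Proof.
  induction g as [|x|l IHl c _ r _]; intros i j Hi Hj.
  - rewrite (Gamma_G1 Hi), (Gamma_G1 Hj); auto.
  - rewrite (Gamma_GX Hi), (Gamma_GX Hj); auto.
  - destruct (Gamma_GT Hi) as (i' & -> & Hl & _).
    destruct (Gamma_GT Hj) as (j' & -> & Hl' & _).
    rewrite (IHl _ _ Hl Hl'); auto.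
Qed.

Definition node (g : gtree X) := inGamma g /\ g <> G1.
Definition child (a b : gtree X) := a = glft b \/ a = grgt b.
Definition adj (a b : gtree X) := child a b \/ child b a.

Lemma child_level a b i : Gamma i b -> child a b -> a <> G1 ->
  exists j, i = S (S j) /\ Gamma (S j) a /\ exists l c r, b = GT l c r.
Proof.
  intros Hb Hc Ha. destruct b as [|x|l c r].
  - destruct Hc as [H|H]; simpl in H; congruence.
  - destruct Hc as [H|H]; simpl in H; congruence.
  - destruct (Gamma_GT Hb) as (j & -> & Hl & Hcc & Hr & _).
    exists j; split; auto. split.
    + destruct Hc as [H|H]; simpl in H; subst; auto.
    + eauto.
Qed.

Lemma node_child a b : node b -> child a b -> a <> G1 -> node a.
Proof.
  intros [[i Hb] _] Hc Ha. destruct (child_level Hb Hc Ha) as (j & _ & Hj & _).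
  split; auto. exists (S j); auto.
Qed.

Fixpoint chainR (R : gtree X -> gtree X -> Prop) (a : gtree X) (l : list (gtree X)) : Prop :=
  match l with nil => True | b :: l' => R a b /\ chainR R b l' end.

Lemma last_cons_ne (b c : gtree X) l d : last (c :: l) d = last (c :: l) b.
Proof.
  revert c; induction l as [|e l IH]; intros c; simpl; auto.
  specialize (IH e). simpl in IH. destruct l; auto.
Qed.

Lemma last_cons (b : gtree X) l d : last (b :: l) d = last l b.
Proof. destruct l; simpl; auto. apply (last_cons_ne b g l d). Qed.

Lemma chainR_app R a l1 l2 : chainR R a (l1 ++ l2) <-> chainR R a l1 /\ chainR R (last l1 a) l2.
Proof.
  revert a; induction l1 as [|b l1 IH]; intros a; simpl.
  - tauto.
  - rewrite IH. replace (match l1 with [] => b | _ :: _ => last l1 a end) with (last l1 b)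
      by (symmetry; apply (last_cons b l1 a)). tauto.
Qed.

Definition walk a l := node a /\ chainR (fun x y => adj x y /\ node y) a l.
Definition desc a l := chainR (fun x y => child y x) a l.

Lemma walk_last a l : walk a l -> node (last l a).
Proof.
  revert a; induction l as [|b l IH]; intros a [Ha Hc]; [simpl; auto|].
  simpl in Hc. destruct Hc as [[_ Hb] Hc].
  rewrite (last_cons b l a). apply IH. split; auto.
Qed.

Lemma walk_app a l1 l2 : walk a (l1 ++ l2) <-> walk a l1 /\ walk (last l1 a) l2.
Proof.
  unfold walk. rewrite chainR_app. split.
  - intros [Ha [H1 H2]]. split; [split; auto|]. split; auto.
    apply (walk_last (a:=a) (l:=l1)). split; auto.
  - intros [[Ha H1] [_ H2]]. auto.
Qed.

End Trees.
Section Semi.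
Variable S : Type.
Variable mul : S -> S -> S.
Hypothesis mul_assoc : forall a b c, mul a (mul b c) = mul (mul a b) c.
Local Notation "a ** b" := (mul1 mul a b) (at level 40, left associativity).

Lemma m1A a b c : a ** (b ** c) = a ** b ** c.
Proof. destruct a, b, c; simpl; auto. rewrite mul_assoc; auto. Qed.
Lemma m1_r a : a ** None = a.
Proof. destruct a; reflexivity. Qed.
Lemma m1_l a : None ** a = a.
Proof. reflexivity. Qed.

Definition ev (l : list (option S)) := fold_right (mul1 mul) None l.
Lemma ev_app l1 l2 : ev (l1 ++ l2) = ev l1 ** ev l2.
Proof. induction l1; simpl; auto. rewrite IHl1, m1A; auto. Qed.
Lemma ev1 a : ev [a] = a.
Proof. apply m1_r. Qed.
Lemma sub_rw l1 u v l2 : ev u = ev v -> ev (l1 ++ u ++ l2) = ev (l1 ++ v ++ l2).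
Proof. intros H. rewrite !ev_app, H. auto. Qed.

Ltac evn := unfold ev; cbn [fold_right]; rewrite ?m1_r; rewrite ?m1A.
Ltac step l1 u v l2 H := etransitivity; [apply (@sub_rw l1 u v l2 H)|]; cbn [app].

Lemma np_abs kl kc kr h : kc ** kc = kc -> sandwich mul (kr ** kc) (kc ** kl) h ->
  h ** kl ** h = h /\ h ** kr ** h = h.
Proof.
  intros Hc (H1 & H2 & H3 & H4).
  unfold idem1 in H1.
  assert (E1 : ev [h;h] = ev [h]) by (evn; rewrite ?m1A in *; congruence).
  assert (E2 : ev [kc;kl;h] = ev [h]) by (evn; rewrite ?m1A in *; congruence).
  assert (E3 : ev [h;kr;kc] = ev [h]) by (evn; rewrite ?m1A in *; congruence).
  assert (E4 : ev [kr;kc;h;kc;kl] = ev [kr;kc;kl]).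
  { evn. rewrite !m1A in H4. rewrite H4. rewrite <- (m1A kr kc kc), Hc. auto. }
  assert (K : ev [h;kr;kc;kl;h] = ev [h]).
  { step (@nil (option S)) [h;kr;kc;kl;h] [h;kr;kc;h;kc;kl;h] (@nil (option S))
      (@sub_rw [h] [kr;kc;kl] [kr;kc;h;kc;kl] [h] (eq_sym E4)).
    step (@nil (option S)) [h;kr;kc] [h] [h;kc;kl;h] E3.
    step [h;h] [kc;kl;h] [h] (@nil (option S)) E2.
    step (@nil (option S)) [h;h] [h] [h] E1.
    exact E1. }
  split.
  - assert (G : ev [h;kl;h] = ev [h]).
    { step (@nil (option S)) [h] [h;kr;kc] [kl;h] (eq_sym E3). exact K. }
    revert G; evn; auto.
  - assert (G : ev [h;kr;h] = ev [h]).
    { step [h;kr] [h] [kc;kl;h] (@nil (option S)) (eq_sym E2). exact K. }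
    revert G; evn; auto.
Qed.

Lemma R2_abs k1 k2 Q b0 : k2 ** Q = Q -> k2 ** k1 ** k2 = k2 -> Q ** b0 ** Q = Q ->
  k1 ** Q ** (b0 ** k2) ** (k1 ** Q) = k1 ** Q.
Proof.
  intros H1 H2 H3.
  assert (E1 : ev [k2;Q] = ev [Q]) by (evn; auto).
  assert (E2 : ev [k2;k1;k2] = ev [k2]) by (evn; auto).
  assert (E3 : ev [Q;b0;Q] = ev [Q]) by (evn; auto).
  assert (G : ev [k1;Q;b0;k2;k1;Q] = ev [k1;Q]).
  { step [k1;Q;b0;k2;k1] [Q] [k2;Q] (@nil (option S)) (eq_sym E1).
    step [k1;Q;b0] [k2;k1;k2] [k2] [Q] E2.
    step [k1;Q;b0] [k2;Q] [Q] (@nil (option S)) E1.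
    step [k1] [Q;b0;Q] [Q] (@nil (option S)) E3. reflexivity. }
  revert G; evn; auto.
Qed.

Lemma R3_abs k1 k2 Q b0 : Q ** k2 = Q -> k2 ** k1 ** k2 = k2 -> Q ** b0 ** Q = Q ->
  Q ** k1 ** (k2 ** b0) ** (Q ** k1) = Q ** k1.
Proof.
  intros H1 H2 H3.
  assert (E1 : ev [Q;k2] = ev [Q]) by (evn; auto).
  assert (E2 : ev [k2;k1;k2] = ev [k2]) by (evn; auto).
  assert (E3 : ev [Q;b0;Q] = ev [Q]) by (evn; auto).
  assert (G : ev [Q;k1;k2;b0;Q;k1] = ev [Q;k1]).
  { step (@nil (option S)) [Q] [Q;k2] [k1;k2;b0;Q;k1] (eq_sym E1).
    step [Q] [k2;k1;k2] [k2] [b0;Q;k1] E2.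
    step (@nil (option S)) [Q;k2] [Q] [b0;Q;k1] E1.
    step (@nil (option S)) [Q;b0;Q] [Q] [k1] E3. reflexivity. }
  revert G; evn; auto.
Qed.

Lemma valley_abs kp kv kx h : kv ** kv = kv -> sandwich mul (kp ** kv) (kv ** kx) h ->
  kp ** kv ** kx = kp ** h ** kx.
Proof.
  intros Hv (H1 & H2 & H3 & H4).
  assert (Ev : ev [kv;kv] = ev [kv]) by (evn; auto).
  assert (E2 : ev [kv;kx;h] = ev [h]) by (evn; rewrite ?m1A in *; congruence).
  assert (E3 : ev [h;kp;kv] = ev [h]) by (evn; rewrite ?m1A in *; congruence).
  assert (E4 : ev [kp;kv;h;kv;kx] = ev [kp;kv;kx]).
  { evn. rewrite !m1A in H4. rewrite H4. rewrite <- (m1A kp kv kv), Hv. auto. }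
  assert (F1 : ev [kv;h] = ev [h]).
  { step [kv] [h] [kv;kx;h] (@nil (option S)) (eq_sym E2).
    step (@nil (option S)) [kv;kv] [kv] [kx;h] Ev. exact E2. }
  assert (F2 : ev [h;kv] = ev [h]).
  { step (@nil (option S)) [h] [h;kp;kv] [kv] (eq_sym E3).
    step [h;kp] [kv;kv] [kv] (@nil (option S)) Ev. exact E3. }
  assert (G : ev [kp;kv;kx] = ev [kp;h;kx]).
  { step (@nil (option S)) [kp;kv;kx] [kp;kv;h;kv;kx] (@nil (option S)) (eq_sym E4).
    step [kp] [kv;h] [h] [kv;kx] F1.
    step [kp] [h;kv] [h] [kx] F2. reflexivity. }
  revert G; evn; auto.
Qed.

Lemma sandwich_exists (e f x : S) : mul e e = e -> mul f f = f ->
  mul (mul (mul e f) x) (mul e f) = mul e f ->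
  sandwich mul (Some e) (Some f)
    (Some (mul f (mul x (mul (mul e f) (mul x e))))).
Proof.
  intros He Hf Hx.
  set (E := Some e). set (F := Some f). set (Xo := Some x). set (Ao := Some (mul e f)).
  assert (HE : ev [E;E] = ev [E]) by (simpl; rewrite He; auto).
  assert (HF : ev [F;F] = ev [F]) by (simpl; rewrite Hf; auto).
  assert (HA : ev [E;F] = ev [Ao]) by reflexivity.
  assert (HX : ev [Ao;Xo;Ao] = ev [Ao]) by (simpl; rewrite (mul_assoc (mul e f) x (mul e f)), Hx; auto).
  assert (Hh : Some (mul f (mul x (mul (mul e f) (mul x e)))) = ev [F;Xo;Ao;Xo;E]) by reflexivity.
  rewrite Hh. unfold sandwich, idem1.
  assert (K1 : ev [F;Xo;Ao;Xo;E] ** ev [F;Xo;Ao;Xo;E] = ev [F;Xo;Ao;Xo;E]).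
  { rewrite <- ev_app. cbn [app].
    step [F;Xo;Ao;Xo] [E;F] [Ao] [Xo;Ao;Xo;E] HA.
    step [F;Xo] [Ao;Xo;Ao] [Ao] [Xo;Ao;Xo;E] HX.
    step [F;Xo] [Ao;Xo;Ao] [Ao] [Xo;E] HX. reflexivity. }
  assert (K2 : F ** ev [F;Xo;Ao;Xo;E] = ev [F;Xo;Ao;Xo;E]).
  { replace (F ** ev [F;Xo;Ao;Xo;E]) with (ev ([F] ++ [F;Xo;Ao;Xo;E])) by (rewrite ev_app, ev1; auto). cbn [app].
    step (@nil (option S)) [F;F] [F] [Xo;Ao;Xo;E] HF. reflexivity. }
  assert (K3 : ev [F;Xo;Ao;Xo;E] = ev [F;Xo;Ao;Xo;E] ** E).
  { replace (ev [F;Xo;Ao;Xo;E] ** E) with (ev ([F;Xo;Ao;Xo;E] ++ [E])) by (rewrite ev_app, ev1; auto). cbn [app].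
    step [F;Xo;Ao;Xo] [E] [E;E] (@nil (option S)) (eq_sym HE). reflexivity. }
  assert (K4 : E ** ev [F;Xo;Ao;Xo;E] ** F = E ** F).
  { replace (E ** ev [F;Xo;Ao;Xo;E] ** F) with (ev ([E] ++ [F;Xo;Ao;Xo;E] ++ [F])) by (rewrite !ev_app, !ev1, m1A; auto).
    replace (E ** F) with (ev [E;F]) by (evn; auto). cbn [app].
    step (@nil (option S)) [E;F] [Ao] [Xo;Ao;Xo;E;F] HA.
    step [Ao;Xo;Ao;Xo] [E;F] [Ao] (@nil (option S)) HA.
    step (@nil (option S)) [Ao;Xo;Ao] [Ao] [Xo;Ao] HX.
    step (@nil (option S)) [Ao;Xo;Ao] [Ao] (@nil (option S)) HX.
    exact (eq_sym HA). }
  auto.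
Qed.

Section Phi.
Variable X : Type.
Variable phi : gtree X -> option S.
Hypothesis Hid : forall g, inGamma g -> idem1 mul (phi g).
Hypothesis Hii : forall x, mul1 mul (phi G1) (phi (GX x)) = phi (GX x) /\
                           mul1 mul (phi (GX x)) (phi G1) = phi (GX x).
Hypothesis Hiii : forall i l c r, Gamma (Datatypes.S (Datatypes.S i)) (GT l c r) ->
     sandwich mul (mul1 mul (phi r) (phi c)) (mul1 mul (phi c) (phi l)) (phi (GT l c r)).

Lemma node_idem g : node g -> phi g ** phi g = phi g.
Proof. intros [H _]. apply (Hid H). Qed.

Lemma node_prop a b : node b -> child a b -> node a -> phi b ** phi a ** phi b = phi b.
Proof.
  intros Hb Hc Ha. destruct Hb as [[i Hb] _].
  destruct (child_level Hb Hc (proj2 Ha)) as (j & -> & _ & l & c & r & ->).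
  destruct (Gamma_GT Hb) as (j' & E & Hl & Hcc & Hr & _).
  injection E; intros; subst j'.
  assert (Hci : phi c ** phi c = phi c) by (apply Hid; exists j; auto).
  destruct (np_abs Hci (Hiii Hb)) as [K1 K2].
  destruct Hc as [-> | ->]; simpl; auto.
Qed.

Definition prodl (l : list (gtree X)) := fold_right (fun b acc => phi b ** acc) None l.
Definition prodw a l := phi a ** prodl l.

Lemma prodw_app a l1 l2 : phi (last l1 a) ** phi (last l1 a) = phi (last l1 a) ->
  prodw a (l1 ++ l2) = prodw a l1 ** prodw (last l1 a) l2.
Proof.
  unfold prodw. revert a; induction l1 as [|b l1 IH]; intros a Hl.
  - simpl in Hl |- *. rewrite m1_r, !m1A, Hl. auto.
  - rewrite (last_cons b l1 a) in Hl. rewrite (last_cons b l1 a).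
    change (prodl ((b :: l1) ++ l2)) with (phi b ** prodl (l1 ++ l2)).
    change (prodl (b :: l1)) with (phi b ** prodl l1).
    rewrite (IH b Hl). rewrite !m1A. auto.
Qed.

Lemma prodw_last a l : walk a l -> prodw a l ** phi (last l a) = prodw a l.
Proof.
  intros Hw. pose proof (node_idem (walk_last Hw)) as Hl.
  pose proof (prodw_app [] Hl) as E. rewrite app_nil_r in E.
  unfold prodw at 3 in E. simpl in E. rewrite m1_r in E. auto.
Qed.

Lemma prodw_head a l : node a -> phi a ** prodw a l = prodw a l.
Proof. intros Ha. unfold prodw. rewrite m1A, (node_idem Ha). auto. Qed.

Lemma prodw_cons a b l : prodw a (b :: l) = phi a ** prodw b l.
Proof. reflexivity. Qed.

Lemma prodw_nil a : prodw a [] = phi a.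
Proof. apply m1_r. Qed.

Section Reg.
Variable A : option S -> Prop.
Hypothesis HA : forall g, node g -> generated mul A (phi g).

Lemma gen_mul b c : generated mul A b -> generated mul A c -> generated mul A (b ** c).
Proof. intros Hb Hc T H1 H2. apply H2; [apply Hb|apply Hc]; auto. Qed.

Definition reg s := exists b, generated mul A b /\ s ** b ** s = s.

Lemma reg_base a : node a -> reg (prodw a []).
Proof.
  intros Ha. rewrite prodw_nil. exists (phi a). split; auto.
  rewrite !(node_idem Ha). auto.
Qed.

Lemma R2 a b l : node a -> node b -> child a b -> reg (prodw b l) -> reg (prodw a (b :: l)).
Proof.
  intros Ha Hb Hc [b0 [Hg Hr]]. rewrite prodw_cons.
  exists (b0 ** phi b). split.
  - apply gen_mul; auto.
  - apply R2_abs; auto. apply prodw_head; auto. apply node_prop; auto.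
Qed.

Lemma R3 a l z : walk a (l ++ [z]) -> child z (last l a) -> reg (prodw a l) ->
  reg (prodw a (l ++ [z])).
Proof.
  intros Hw Hc [b0 [Hg Hr]].
  apply walk_app in Hw. destruct Hw as [Hw1 Hw2].
  pose proof (walk_last Hw1) as Hy.
  rewrite (prodw_app _ (node_idem Hy)).
  rewrite prodw_cons, prodw_nil.
  destruct Hw2 as [_ [[_ Hz] _]].
  exists (phi (last l a) ** b0). split.
  - apply gen_mul; auto.
  - assert (E : prodw a l ** (phi (last l a) ** phi z) = prodw a l ** phi z)
      by (rewrite m1A, (prodw_last Hw1); auto).
    rewrite E. apply R3_abs; auto.
    apply prodw_last; auto. apply node_prop; auto.
Qed.


Lemma valley_node p v x : node p -> node x -> node v -> child v p -> child v x -> p <> x ->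
  node (GT x v p) /\ phi p ** phi v ** phi x = phi p ** phi (GT x v p) ** phi x.
Proof.
  intros [[i Hp] _] [[i' Hx] _] Hv Hvp Hvx Hpx.
  destruct (child_level Hp Hvp (proj2 Hv)) as (j & -> & Hj & _).
  destruct (child_level Hx Hvx (proj2 Hv)) as (j' & -> & Hj' & _).
  pose proof (Gamma_unique Hj Hj') as E. injection E; intros; subst j'.
  assert (HG : Gamma (Datatypes.S (Datatypes.S (Datatypes.S j))) (GT x v p)).
  { simpl. exists x, v, p. repeat split; auto. }
  split.
  - split; [exists (Datatypes.S (Datatypes.S (Datatypes.S j))); auto | discriminate].
  - apply valley_abs; [apply node_idem; auto|]. apply (Hiii HG).
Qed.

Section WithIH.
Variable n : nat.
Hypothesis IH : forall a l, length l <= n -> walk a l -> reg (prodw a l).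

Lemma valley_core L0 a v x R : length (L0 ++ v :: x :: R) <= Datatypes.S n ->
  walk a (L0 ++ v :: x :: R) -> desc a (L0 ++ [v]) -> child v x ->
  reg (prodw a (L0 ++ v :: x :: R)) \/
  (node (GT x v (last L0 a)) /\
   prodw a (L0 ++ v :: x :: R) = prodw a (L0 ++ GT x v (last L0 a) :: x :: R) /\
   walk a (L0 ++ GT x v (last L0 a) :: x :: R) /\ node (last L0 a)).
Proof.
  intros Hlen Hw Hd Hvx.
  apply walk_app in Hw. destruct Hw as [Hw1 Hw2].
  unfold desc in Hd. apply chainR_app in Hd. destruct Hd as [_ [Hvp _]].
  set (p := last L0 a) in *.
  pose proof (walk_last Hw1) as Hp. fold p in Hp.
  destruct Hw2 as [_ [[_ Hv] [[_ Hx] HR]]].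
  rewrite (prodw_app _ (node_idem Hp)). fold p.
  destruct (classic (p = x)) as [Epx | Npx].
  - left. rewrite <- Epx in *.
    assert (E : prodw p (v :: p :: R) = prodw p R).
    { unfold prodw. simpl. rewrite !m1A, (node_prop Hp Hvp Hv). auto. }
    rewrite E, <- (prodw_app _ (node_idem Hp)).
    apply IH.
    + rewrite length_app in *. simpl in *. lia.
    + apply walk_app. split; auto. split; auto.
  - right. destruct (valley_node Hp Hx Hv Hvp Hvx Npx) as [Hh Eh].
    split; [|split; [|split]]; auto.
    + rewrite (prodw_app _ (node_idem Hp)). fold p. f_equal.
      unfold prodw. simpl. rewrite !m1A, Eh. auto.
    + apply walk_app. split; auto. fold p.
      split; auto. simpl. split; [split; [left; right; reflexivity | exact Hh]|].
      split; [split; [right; left; reflexivity | exact Hx]|]. exact HR.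
Qed.

Lemma valley L0 : forall a v x R, length (L0 ++ v :: x :: R) <= Datatypes.S n ->
  walk a (L0 ++ v :: x :: R) -> desc a (L0 ++ [v]) -> child v x ->
  reg (prodw a (L0 ++ v :: x :: R)).
Proof.
  induction L0 as [|q L1 IHL] using rev_ind; intros a v x R Hlen Hw Hd Hvx.
  - destruct (valley_core Hlen Hw Hd Hvx) as [H | (Hh & E & Hw' & Hp)]; auto.
    rewrite E. simpl in *. apply R2; auto.
    + right; reflexivity.
    + apply IH.
      * simpl in *. lia.
      * destruct Hw' as [_ [_ Hc]]. split; auto.
  - destruct (valley_core Hlen Hw Hd Hvx) as [H | (Hh & E & Hw' & Hp)]; auto.
    rewrite E. rewrite last_last in *. rewrite <- app_assoc in *. simpl in *.
    apply IHL; auto.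
    + rewrite !length_app in *. simpl in *. lia.
    + unfold desc in *.
      apply chainR_app in Hd. destruct Hd as [Hd1 [Hd2 _]].
      apply chainR_app. split; auto. simpl. split; auto.
    + right; reflexivity.
Qed.

Lemma scan R : forall L a, L <> [] -> length (L ++ R) <= Datatypes.S n ->
  walk a (L ++ R) -> desc a L -> reg (prodw a (L ++ R)).
Proof.
  induction R as [|x R IHR]; intros L a HL Hlen Hw Hd.
  - rewrite app_nil_r in *. destruct (exists_last HL) as (L0 & z & ->).
    apply R3; auto.
    + unfold desc in Hd. apply chainR_app in Hd. destruct Hd as [_ [Hz _]]. exact Hz.
    + apply IH.
      * rewrite length_app in Hlen. simpl in Hlen. lia.
      * apply walk_app in Hw. tauto.
  - pose proof Hw as Hw0. apply walk_app in Hw0. destruct Hw0 as [Hw1 [_ [[Hadj _] _]]].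
    destruct Hadj as [Hup | Hdown].
    + destruct (exists_last HL) as (L0 & v & ->).
      rewrite last_last in Hup. rewrite <- app_assoc in *. simpl in *.
      apply valley; auto.
    + replace (L ++ x :: R) with ((L ++ [x]) ++ R) in * by (rewrite <- app_assoc; auto).
      apply IHR; auto.
      * destruct L; simpl; discriminate.
      * unfold desc in *. apply chainR_app. split; auto. simpl. auto.
Qed.

End WithIH.

Lemma walk_reg n : forall a l, length l <= n -> walk a l -> reg (prodw a l).
Proof.
  induction n as [|n IHn]; intros a l Hlen Hw.
  - destruct l; [apply reg_base; apply Hw | simpl in Hlen; lia].
  - destruct l as [|b l]; [apply reg_base; apply Hw|].
    destruct Hw as [Ha [[Hadj Hb] Hc]].
    destruct Hadj as [Hab | Hba].
    + apply R2; auto. apply IHn; [simpl in Hlen; lia | split; auto].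
    + apply (@scan n IHn l [b]);
        [discriminate | exact Hlen | split; [exact Ha| split; [split; [right; exact Hba | exact Hb] | exact Hc]] | split; [exact Hba | exact I]].
Qed.

End Reg.

Local Notation Sn := Datatypes.S.

Lemma node_of i (g : gtree X) : Gamma (Sn i) g -> node g.
Proof.
  intros H. split; [exists (Sn i); auto|]. intros ->. apply Gamma_G1 in H. discriminate.
Qed.

Lemma descw i : forall p, Gamma (Sn i) p ->
  exists L x, walk p L /\ last L p = GX x /\ prodw p L = phi p.
Proof.
  induction i as [i IH] using (well_founded_induction Wf_nat.lt_wf). intros p Hp.
  destruct i as [|j].
  - destruct Hp as [x ->]. exists [], x.
    split; [split; [apply (@node_of 0 _); simpl; eauto | exact I] | split; [reflexivity | apply prodw_nil]].
  - destruct p as [| y | l c r];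
      [apply Gamma_G1 in Hp; discriminate | apply Gamma_GX in Hp; discriminate |].
    destruct (Gamma_GT Hp) as (j' & E & Hl & Hc & Hr & Hlr & Hcl & Hcr).
    injection E; intros; subst j'.
    pose proof (node_of Hp) as Hpn.
    pose proof (Hiii Hp) as (_ & _ & H3 & _).
    destruct j as [|k].
    + simpl in Hc. destruct Hr as [y ->]. subst c.
      exists [GX y], y. split; [|split; [reflexivity|]].
      * split; [exact Hpn|]. split; [|exact I]. split; [right; right; reflexivity|].
        apply (@node_of 0 _). simpl; eauto.
      * rewrite (proj2 (Hii y)) in H3. unfold prodw. simpl. rewrite m1_r. auto.
    + destruct (IH k ltac:(lia) c Hc) as (L' & x & Hw' & Hlast & Hprod).
      exists (r :: c :: L'), x. split; [|split].
      * split; auto. split; [split; [right; right; reflexivity | apply (node_of Hr)]|].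
        split; [split; [right; exact Hcr | apply (node_of Hc)]|]. apply Hw'.
      * rewrite !last_cons. auto.
      * change (prodw (GT l c r) (r :: c :: L')) with (phi (GT l c r) ** (phi r ** prodw c L')).
        rewrite Hprod. auto.
Qed.

Lemma ascw i : forall q, Gamma (Sn i) q ->
  exists z L, walk (GX z) L /\ last L (GX z) = q /\ prodw (GX z) L = phi q.
Proof.
  induction i as [i IH] using (well_founded_induction Wf_nat.lt_wf). intros q Hq.
  destruct i as [|j].
  - destruct Hq as [z ->]. exists z, [].
    split; [split; [apply (@node_of 0 _); simpl; eauto | exact I] | split; [reflexivity | apply prodw_nil]].
  - destruct q as [| y | l c r];
      [apply Gamma_G1 in Hq; discriminate | apply Gamma_GX in Hq; discriminate |].
    destruct (Gamma_GT Hq) as (j' & E & Hl & Hc & Hr & Hlr & Hcl & Hcr).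
    injection E; intros; subst j'.
    pose proof (node_of Hq) as Hqn.
    pose proof (Hiii Hq) as (_ & H2 & _ & _).
    destruct j as [|k].
    + simpl in Hc. destruct Hl as [z ->]. subst c.
      exists z, [GT (GX z) G1 r]. split; [|split; [reflexivity|]].
      * split; [apply (@node_of 0 _); simpl; eauto|]. split; [|exact I].
        split; [left; left; reflexivity | exact Hqn].
      * rewrite (proj1 (Hii z)) in H2. unfold prodw. simpl. rewrite m1_r. auto.
    + destruct (IH k ltac:(lia) c Hc) as (z & L' & Hw' & Hlast & Hprod).
      exists z, (L' ++ [l; GT l c r]). split; [|split].
      * apply walk_app. split; auto. rewrite Hlast.
        split; [apply (node_of Hc)|].
        split; [split; [left; exact Hcl | apply (node_of Hl)]|].
        split; [split; [left; left; reflexivity | exact Hqn]| exact I].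
      * replace (L' ++ [l; GT l c r]) with ((L' ++ [l]) ++ [GT l c r])
          by (rewrite <- app_assoc; auto). apply last_last.
      * rewrite (prodw_app _ (node_idem (walk_last Hw'))). rewrite Hprod, Hlast.
        unfold prodw. simpl. rewrite m1_r, !m1A, (node_idem (node_of Hc)).
        rewrite <- (m1A (phi c)), m1A. auto.
Qed.

Lemma connector x z : exists C, walk (GX x) C /\ last C (GX x) = GX z /\
  prodw (GX x) C = phi (GX x) ** phi (GX z).
Proof.
  assert (Hx : node (GX x)) by (apply (@node_of 0 _); simpl; eauto).
  assert (Hz : node (GX z)) by (apply (@node_of 0 _); simpl; eauto).
  destruct (classic (x = z)) as [<- | Nxz].
  - exists []. split; [split; auto; exact I|]. split; auto.
    rewrite prodw_nil, (node_idem Hx). auto.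
  - assert (HG : Gamma 2 (GT (GX z) G1 (GX x))).
    { simpl. exists (GX z), G1, (GX x). repeat split; eauto.
      intros E; injection E; auto. }
    exists [GT (GX z) G1 (GX x); GX z]. split; [|split; [reflexivity|]].
    + split; auto. split; [split; [left; right; reflexivity | apply (node_of HG)]|].
      split; [split; [right; left; reflexivity | exact Hz]| exact I].
    + pose proof (Hiii HG) as (_ & _ & _ & H4).
      rewrite (proj2 (Hii x)), (proj1 (Hii z)) in H4.
      unfold prodw. simpl. rewrite m1_r, !m1A. auto.
Qed.

Lemma last_app_gen (l1 l2 : list (gtree X)) d : last (l1 ++ l2) d = last l2 (last l1 d).
Proof.
  revert d; induction l1 as [|b l1 IH]; intros d; [reflexivity|].
  change ((b :: l1) ++ l2) with (b :: (l1 ++ l2)). rewrite !last_cons. apply IH.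
Qed.

Lemma connect p q : node p -> node q -> exists C, walk p C /\ last C p = q /\
  prodw p C = phi p ** phi q.
Proof.
  intros [[i Hp] Np] [[i' Hq] Nq].
  destruct i as [|i]; [simpl in Hp; contradiction|].
  destruct i' as [|i']; [simpl in Hq; contradiction|].
  destruct (descw Hp) as (L1 & x & Hw1 & Hl1 & Hp1).
  destruct (ascw Hq) as (z & L2 & Hw2 & Hl2 & Hp2).
  destruct (connector x z) as (C & Hc & Hlc & Hpc).
  exists (L1 ++ C ++ L2). split; [|split].
  - apply walk_app. split; auto. rewrite Hl1. apply walk_app. split; auto. rewrite Hlc. auto.
  - rewrite !last_app_gen, Hl1, Hlc. auto.
  - rewrite (prodw_app _ (node_idem (walk_last Hw1))). rewrite Hl1.
    rewrite (prodw_app _ (node_idem (walk_last Hc))). rewrite Hlc.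
    rewrite Hpc, Hp1, <- Hp2.
    pose proof (prodw_last Hw1) as E1. rewrite Hl1, Hp1 in E1.
    pose proof (prodw_head L2 (proj1 Hw2)) as E2.
    rewrite !m1A, E1, <- (m1A _ (phi (GX z))), E2. auto.
Qed.

Section Gen.
Variable A : option S -> Prop.
Hypothesis HA2 : forall b, A b -> exists g, node g /\ phi g = b.

Lemma gen_walk s : generated mul A s -> exists a l, walk a l /\ s = prodw a l.
Proof.
  intros H. apply H.
  - intros b Hb. destruct (HA2 Hb) as (g & Hg & <-). exists g, [].
    split; [split; auto; exact I | symmetry; apply prodw_nil].
  - intros b c (a1 & l1 & Hw1 & ->) (a2 & l2 & Hw2 & ->).
    pose proof (walk_last Hw1) as He.
    destruct (connect He (proj1 Hw2)) as (C & Hc & Hlc & Hpc).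
    exists a1, (l1 ++ C ++ l2). split.
    + apply walk_app. split; auto. apply walk_app. split; auto. rewrite Hlc. auto.
    + rewrite (prodw_app _ (node_idem He)).
      rewrite (prodw_app _ (node_idem (walk_last Hc))). rewrite Hlc, Hpc.
      rewrite !m1A, (prodw_last Hw1), <- (m1A _ (phi a2)), (prodw_head _ (proj1 Hw2)). auto.
Qed.
End Gen.

End Phi.

Local Notation Sn := Datatypes.S.

Lemma phi_some (Y : Type) (phi : gtree Y -> option S) (phi' : Y -> S)
  (Hext : forall x, phi (GX x) = Some (phi' x))
  (Hiii : forall i l c r, Gamma (Sn (Sn i)) (GT l c r) ->
     sandwich mul (phi r ** phi c) (phi c ** phi l) (phi (GT l c r))) :
  forall i g, Gamma (Sn i) g -> exists s, phi g = Some s.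
Proof.
  induction i as [|j IH]; intros g Hg.
  - destruct Hg as [x ->]. eauto.
  - destruct g as [| y | l c r];
      [apply Gamma_G1 in Hg; discriminate | apply Gamma_GX in Hg; discriminate |].
    destruct (Gamma_GT Hg) as (j' & E & Hl & _). injection E; intros; subst j'.
    destruct (IH l Hl) as [sl Esl].
    pose proof (Hiii _ _ _ _ Hg) as (_ & H2 & _).
    destruct (phi (GT l c r)) as [s|] eqn:Eg; eauto.
    rewrite Esl in H2. destruct (phi c); simpl in H2; discriminate.
Qed.

Section PhiT.
Variable Y : Type.
Variable phi' : Y -> S.
Variable T : S -> Prop.
Variable s0 : S.
Hypothesis HTmul : forall a b, T a -> T b -> T (mul a b).
Hypothesis HTreg : forall a, T a -> exists b, T b /\ mul (mul a b) a = a.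
Hypothesis HTphi : forall x, T (phi' x).
Hypothesis Hidem : forall x, mul (phi' x) (phi' x) = phi' x.
Hypothesis Hinj : forall x y, phi' x = phi' y -> x = y.

Definition pick (e f : option S) : S :=
  epsilon (inhabits s0) (fun h => T h /\ sandwich mul e f (Some h)).

Fixpoint phiT (g : gtree Y) : option S :=
  match g with
  | G1 => None
  | GX x => Some (phi' x)
  | GT l c r => Some (pick (phiT r ** phiT c) (phiT c ** phiT l))
  end.

Lemma pick_spec e f te tf : e = Some te -> f = Some tf -> T te -> T tf ->
  mul te te = te -> mul tf tf = tf -> T (pick e f) /\ sandwich mul e f (Some (pick e f)).
Proof.
  intros -> -> Ht1 Ht2 He Hf. unfold pick. apply epsilon_spec.
  destruct (HTreg (HTmul Ht1 Ht2)) as [x [Hx Ex]].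
  eexists; split; [|apply (sandwich_exists He Hf Ex)].
  repeat apply HTmul; auto.
Qed.

Definition QT i g := idem1 mul (phiT g) /\ (i <> 0 -> exists t, phiT g = Some t /\ T t) /\
  (forall l c r, g = GT l c r -> sandwich mul (phiT r ** phiT c) (phiT c ** phiT l) (phiT g)).

Lemma QT_np i g a : QT i g -> (forall k, k < i -> forall g', Gamma k g' -> QT k g') ->
  Gamma i g -> child a g -> phiT g ** phiT a ** phiT g = phiT g.
Proof.
  intros [Hid [_ Hs]] IH Hg Hc. unfold idem1 in Hid.
  destruct g as [| y | l c r].
  - destruct Hc as [-> | ->]; simpl; auto.
  - destruct Hc as [-> | ->]; exact Hid.
  - destruct (Gamma_GT Hg) as (j & -> & Hl & Hcc & Hr & _).
    destruct (IH j ltac:(lia) c Hcc) as [Hci _].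
    destruct (np_abs Hci (Hs l c r eq_refl)) as [K1 K2].
    destruct Hc as [-> | ->]; simpl; auto.
Qed.

Lemma QT_all i : forall g, Gamma i g -> QT i g.
Proof.
  induction i as [i IH] using (well_founded_induction Wf_nat.lt_wf). intros g Hg.
  destruct i as [|[|j]].
  - simpl in Hg. subst g. split; [reflexivity|]. split; [intros H; contradiction H; auto|].
    intros l c r E; discriminate.
  - destruct Hg as [x ->]. split; [simpl; unfold idem1; simpl; rewrite Hidem; auto|].
    split; [intros _; exists (phi' x); auto|]. intros l c r E; discriminate.
  - destruct g as [| y | l c r];
      [apply Gamma_G1 in Hg; discriminate | apply Gamma_GX in Hg; discriminate |].
    destruct (Gamma_GT Hg) as (j' & E & Hl & Hc & Hr & Hlr & Hcl & Hcr).
    injection E; intros; subst j'.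
    pose proof (IH _ (le_n _) l Hl) as Ql. pose proof (IH _ (le_n _) r Hr) as Qr.
    pose proof (IH j ltac:(lia) c Hc) as Qc.
    destruct (proj1 (proj2 Ql) ltac:(discriminate)) as (tl & El & Tl).
    destruct (proj1 (proj2 Qr) ltac:(discriminate)) as (tr & Er & Tr).
    assert (IH' : forall k, k < Sn j -> forall g', Gamma k g' -> QT k g')
      by (intros k Hk; apply IH; lia).
    pose proof (QT_np Qr IH' Hr Hcr) as Npr.
    pose proof (QT_np Ql IH' Hl Hcl) as Npl.
    assert (Hsw : T (pick (phiT r ** phiT c) (phiT c ** phiT l)) /\
       sandwich mul (phiT r ** phiT c) (phiT c ** phiT l)
         (Some (pick (phiT r ** phiT c) (phiT c ** phiT l)))).
    { destruct j as [|k].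
      - simpl in Hc. subst c. simpl phiT at 2 3 4 5.
        rewrite El, Er in *. simpl in Npl, Npr.
        apply (pick_spec (te := tr) (tf := tl)); auto.
        + unfold idem1 in Ql. destruct Qr as [Qr _]. unfold idem1 in Qr.
          rewrite Er in Qr. simpl in Qr. injection Qr; auto.
        + destruct Ql as [Ql _]. unfold idem1 in Ql.
          rewrite El in Ql. simpl in Ql. injection Ql; auto.
      - destruct (proj1 (proj2 Qc) ltac:(discriminate)) as (tc & Ec & Tc).
        rewrite Ec, El, Er in *.
        apply (pick_spec (te := mul tr tc) (tf := mul tc tl)); auto.
        + simpl in Npr. injection Npr; intros Npr'.
          rewrite (mul_assoc (mul tr tc) tr tc), Npr'. auto.
        + simpl in Npl. injection Npl; intros Npl'.
          rewrite <- (mul_assoc tc tl (mul tc tl)), (mul_assoc tl tc tl), Npl'. auto. }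
    destruct Hsw as [HT Hsw].
    split; [|split].
    + apply Hsw.
    + intros _. eexists; split; [reflexivity | exact HT].
    + intros l' c' r' E'. injection E'; intros; subst. exact Hsw.
Qed.

Lemma phiT_skel : skeleton_mapping mul phiT /\ extends phiT phi'.
Proof.
  split; [|intros x; reflexivity].
  split; [|split; [|split; [|split]]].
  - intros g [i Hg]. apply (QT_all Hg).
  - intros x. exists (phi' x). auto.
  - intros x y E. injection E. apply Hinj.
  - intros x. split; reflexivity.
  - intros i l c r Hg. apply (QT_all Hg). reflexivity.
Qed.

End PhiT.
End Semi.

Unset Implicit Arguments.

Theorem proposition5p6
  (S : Type) (mul : S -> S -> S)
  (mul_assoc : forall a b c, mul a (mul b c) = mul (mul a b) c)
  (X : Type) (X_nonempty : inhabited X)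
  (phi' : X -> S)
  (phi'_inj : forall x y, phi' x = phi' y -> x = y)
  (phi'_idem : forall x, mul (phi' x) (phi' x) = phi' x)
  (A : option S -> Prop)
  (hA : unique_skeleton mul phi' A) :
  (* <A> is a subsemigroup of S ... *)
  (forall a, generated mul A a -> exists s, a = Some s) /\
  (* ... which is regular and contains X phi' ... *)
  regular_subsemigroup mul (fun s => generated mul A (Some s)) /\
  (forall x, generated mul A (Some (phi' x))) /\
  (* ... and is contained in every regular subsemigroup of S containing X phi' *)
  (forall T : S -> Prop, regular_subsemigroup mul T -> (forall x, T (phi' x)) ->
     forall s, generated mul A (Some s) -> T s) /\
  (* in particular, if <A> = S, then S is regular and has no proper regular
     subsemigroup containing X phi' *)
  ((forall s, generated mul A (Some s)) ->
     regular_semigroup mul /\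
     (forall T : S -> Prop, regular_subsemigroup mul T -> (forall x, T (phi' x)) ->
        forall s, T s)).
Proof.
  destruct hA as [[phi0 [Hsk Hext]] Huniq].
  pose proof (Huniq phi0 Hsk Hext) as HAiff.
  destruct Hsk as (Hid & Hi1 & Hinj0 & Hii & Hiii).
  assert (HA : forall g, node g -> generated mul A (phi0 g)).
  { intros g [Hg Hg1] T' H1 H2. apply H1. apply HAiff. exists g; auto. }
  assert (HA2 : forall b, A b -> exists g, node g /\ phi0 g = b).
  { intros b Hb. apply HAiff in Hb. destruct Hb as (g & Hg & Hg1 & E). exists g; split; auto. split; auto. }
  assert (Hsome : forall g, node g -> exists s, phi0 g = Some s).
  { intros g [[i Hg] Hg1]. destruct i as [|i]; [simpl in Hg; contradiction|].
    apply (phi_some Hext Hiii Hg). }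
  assert (P1 : forall a, generated mul A a -> exists s, a = Some s).
  { intros a Ha. apply Ha.
    - intros b Hb. destruct (HA2 b Hb) as (g & Hg & <-). auto.
    - intros b c [sb ->] [sc ->]. exists (mul sb sc). reflexivity. }
  assert (P2 : regular_subsemigroup mul (fun s => generated mul A (Some s))).
  { split.
    - intros a b Ha Hb. exact (gen_mul Ha Hb).
    - intros a Ha. destruct (gen_walk mul_assoc Hid Hii Hiii HA2 Ha) as (p & l & Hw & E).
      destruct (walk_reg mul_assoc Hid Hiii HA (le_n (length l)) Hw) as (b & Hb & Eb).
      rewrite <- E in Eb. destruct (P1 b Hb) as [b' ->].
      exists b'. split; auto. simpl in Eb. injection Eb; auto. }
  assert (P3 : forall x, generated mul A (Some (phi' x))).
  { intros x. rewrite <- Hext. apply HA. split; [exists 1; simpl; eauto | discriminate]. }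
  assert (P4 : forall T : S -> Prop, regular_subsemigroup mul T -> (forall x, T (phi' x)) ->
     forall s, generated mul A (Some s) -> T s).
  { intros T [HTmul HTreg] HTphi s Hs.
    destruct X_nonempty as [x0].
    destruct (phiT_skel mul_assoc (phi' x0) HTmul HTreg HTphi phi'_idem phi'_inj) as [Hsk' Hext'].
    pose proof (Huniq _ Hsk' Hext') as HAiff'.
    assert (G : exists t, Some s = Some t /\ T t).
    { apply Hs.
      - intros b Hb. apply HAiff' in Hb. destruct Hb as (g & [i Hg] & Hg1 & <-).
        destruct (QT_all mul_assoc (phi' x0) HTmul HTreg HTphi phi'_idem Hg) as (_ & Q2 & _).
        apply Q2. intros ->. simpl in Hg. contradiction.
      - intros b c (tb & -> & Tb) (tc & -> & Tc). exists (mul tb tc). split; auto. }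
    destruct G as (t & E & Tt). injection E; intros ->; auto. }
  split; [exact P1|]. split; [exact P2|]. split; [exact P3|]. split; [exact P4|].
  intros Hall. split.
  - intros a. destruct (proj2 P2 a (Hall a)) as (b & _ & Hb). eauto.
  - intros T HT HTphi s. apply (P4 T HT HTphi s (Hall s)).
Qed.
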